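(* Let $N\ge 2$ and let $(\nu_r^{(1:N)})_{r\ge1}$ be vectors of non-negative integers with $\sum_i \nu_r^{(i)} = N$, with $c_N$, $D_N$, $\tau_N$ as defined below, and assume $\tau_N(u)<\infty$ for all $u\ge0$. Fix $t > 0$ and $l \in \mathbb{N}$. Then for any constant $B > 0$, $$\sum_{\substack{s_1,\dots,s_l=1\\\text{all distinct}}}^{\tau_N(t)}\prod_{j=1}^l\big[c_N(s_j) - BD_N(s_j)\big] \geq \sum_{\substack{s_1,\dots,s_l=1\\\text{all distinct}}}^{\tau_N(t)}\prod_{j=1}^l c_N(s_j) - \Bigg(\sum_{s=1}^{\tau_N(t)} D_N(s)\Bigg)(t+1)^{l-1}(1+B)^l.$$
   Context: $(x)_k$ is the falling factorial. $c_N(r) := \frac{1}{(N)_2}\sum_{i=1}^N(\nu_r^{(i)})_2$; $D_N(r) := \frac{1}{N(N)_2}\sum_{i=1}^N(\nu_r^{(i)})_2\{\nu_r^{(i)} + \frac1N\sum_{j\ne i}(\nu_r^{(j)})^2\}$; $\tau_N(u) := \inf\{s\in\{0,1,2,\dots\} : \sum_{r=1}^s c_N(r) \ge u\}$. *)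

(* Defs.v *)
From HB Require Import structures.
From mathcomp Require Import all_boot all_order all_algebra.
From mathcomp Require Import boolp reals.
Set Implicit Arguments. Unset Strict Implicit. Unset Printing Implicit Defensive.
Import Order.TTheory GRing.Theory Num.Theory.
Local Open Scope ring_scope.

(* nu r i = nu_r^{(i+1)}, for r >= 1 and i : 'I_N.  (x)_2 = x ^_ 2 (falling factorial). *)

Definition cN (R : realType) (N : nat) (nu : nat -> 'I_N -> nat) (r : nat) : R :=
  (((N ^_ 2)%N)%:R)^-1 * \sum_(i < N) (((nu r i) ^_ 2)%N)%:R.

Definition DN (R : realType) (N : nat) (nu : nat -> 'I_N -> nat) (r : nat) : R :=
  ((N%:R * ((N ^_ 2)%N)%:R)^-1) *
  \sum_(i < N) (((nu r i) ^_ 2)%N)%:R *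
     ((nu r i)%:R + (N%:R)^-1 * \sum_(j < N | j != i) ((nu r j)%:R) ^+ 2).

Definition csum (R : realType) (N : nat) (nu : nat -> 'I_N -> nat) (s : nat) : R :=
  \sum_(1 <= r < s.+1) cN R nu r.

(* tau_N(u) = inf {s in N : \sum_{r=1}^s c_N(r) >= u}; defined as 0 if the set is empty
   (this case is excluded by the hypotheses of the theorem). *)
Definition tauN (R : realType) (N : nat) (nu : nat -> 'I_N -> nat) (u : R) : nat :=
  match pselect (exists s, (fun s : nat => u <= csum R nu s) s) with
  | left h => ex_minn h
  | right _ => 0%N
  end.

(* sum over l-tuples (s_1,...,s_l) of pairwise distinct elements of {1,...,T}
   of \prod_j f(s_j); the tuple is an injective map 'I_l -> 'I_T, shifted by one. *)
Definition distinct_sum (R : realType) (T l : nat) (f : nat -> R) : R :=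
  \sum_(s : {ffun 'I_l -> 'I_T} | injectiveb s) \prod_(j < l) f (s j).+1.

(* Main.v *)
Require Import Defs.
From HB Require Import structures.
From mathcomp Require Import all_boot all_order all_algebra.
From mathcomp Require Import boolp reals.
From mathcomp Require Import ring lra zify.
Import Order.TTheory GRing.Theory Num.Theory.
Local Open Scope ring_scope.

Section Gen.
Variable R : realType.
Variables (B : R) (x a d : nat -> R).
Hypothesis hB : 0 <= B.
Hypothesis hd : forall j, 0 <= d j.
Hypothesis hda : forall j, d j <= a j.
Hypothesis hx : forall j, x j = a j - B * d j.

Lemma a_ge0 j : 0 <= a j. Proof. exact: le_trans (hd j) (hda j). Qed.

Lemma abs_prod n : `|\prod_(0 <= j < n) x j| <= (1 + B) ^+ n * \prod_(0 <= j < n) a j.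
Proof.
elim: n => [|n IH]; first by rewrite !big_geq // expr0 mul1r normr1.
rewrite !big_nat_recr //= normrM exprSr.
have h1 : `|x n| <= (1 + B) * a n.
  rewrite hx; have := hd n; have := hda n; have := a_ge0 n.
  move=> h0 h2 h3; have h8 := ler_wpM2l hB h2; have h9 := mulr_ge0 hB h3.
  rewrite ler_norml; apply/andP; split; nra.
have h4 : 0 <= \prod_(0 <= j < n) a j by apply: prodr_ge0 => j _; exact: a_ge0.
have := normr_ge0 (\prod_(0 <= j < n) x j); have := normr_ge0 (x n).
have h5 : 0 <= (1 + B) ^+ n by apply: exprn_ge0; apply: addr_ge0.
move=> h6 h7.
rewrite (_ : _ * (1 + B) * _ = ((1 + B) ^+ n * \prod_(0 <= j < n) a j) * ((1 + B) * a n)); last by ring.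
by apply: ler_pM.
Qed.

Lemma tele n : `|\prod_(0 <= j < n) x j - \prod_(0 <= j < n) a j| <=
  \sum_(0 <= k < n) B * (1 + B) ^+ k * \prod_(0 <= j < n) (if j == k then d j else a j).
Proof.
elim: n => [|n IH]; first by rewrite !big_geq // subrr normr0.
rewrite !big_nat_recr //=.
have -> : \prod_(0 <= j < n) x j * x n - \prod_(0 <= j < n) a j * a n =
  (\prod_(0 <= j < n) x j - \prod_(0 <= j < n) a j) * a n - (\prod_(0 <= j < n) x j) * (B * d n).
  by rewrite hx; ring.
apply: le_trans (ler_normB _ _) _.
rewrite eqxx.
have -> : \prod_(0 <= j < n) (if j == n then d j else a j) = \prod_(0 <= j < n) a j.
  by apply: eq_big_nat => j /andP[_ hj]; rewrite ltn_eqF.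
have -> : \sum_(0 <= k < n) B * (1 + B) ^+ k *
     \prod_(0 <= j < n.+1) (if j == k then d j else a j)
   = (\sum_(0 <= k < n) B * (1 + B) ^+ k * \prod_(0 <= j < n) (if j == k then d j else a j)) * a n.
  rewrite big_distrl /=; apply: eq_big_nat => k /andP[_ hk].
  by rewrite big_nat_recr //= eq_sym ltn_eqF // mulrA.
apply: lerD.
  by rewrite normrM (ger0_norm (a_ge0 n)); apply: ler_wpM2r => //; exact: a_ge0.
rewrite normrM (ger0_norm (_ : 0 <= B * d n)); last by apply: mulr_ge0.
rewrite (_ : B * _ * _ = ((1 + B) ^+ n * \prod_(0 <= j < n) a j) * (B * d n)); last by ring.
by apply: ler_wpM2r; [apply: mulr_ge0 | apply: abs_prod].
Qed.
End Gen.
Section Spec.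
Variables (R : realType) (N : nat) (nu : nat -> 'I_N -> nat).
Hypothesis hN : (2 <= N)%N.
Hypothesis hsum : forall r : nat, (1 <= r)%N -> (\sum_(i < N) nu r i)%N = N.

Lemma cN_ge0 r : 0 <= cN R nu r.
Proof. by rewrite /cN mulr_ge0 ?invr_ge0 ?ler0n // sumr_ge0. Qed.

Lemma DN_ge0 r : 0 <= DN R nu r.
Proof.
rewrite /DN mulr_ge0 ?invr_ge0 ?mulr_ge0 ?ler0n // sumr_ge0 // => i _.
by rewrite mulr_ge0 ?ler0n // addr_ge0 ?ler0n // mulr_ge0 ?invr_ge0 ?ler0n // sumr_ge0 // => j _; rewrite sqr_ge0.
Qed.

Lemma nu_le r i : (1 <= r)%N -> (nu r i <= N)%N.
Proof. by move=> hr; rewrite -(hsum _ hr) (bigD1 i) //= leq_addr. Qed.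

Lemma key_nat r i : (1 <= r)%N ->
  (N * nu r i + \sum_(j < N | j != i) (nu r j) ^ 2 <= N * N)%N.
Proof.
move=> hr.
set S := (\sum_(j < N | j != i) nu r j)%N.
have hS : (nu r i + S = N)%N by rewrite /S -[X in _ = X](hsum _ hr) [in RHS](bigD1 i).
have h2 : (\sum_(j < N | j != i) (nu r j) ^ 2 <= S * S)%N.
  rewrite big_distrl /=; apply: leq_sum => j hj.
  rewrite expnS expn1 leq_mul2l; apply/orP; right.
  by rewrite /S (bigD1 j) //= leq_addr.
move: h2; set Q := (\sum_(j < N | j != i) _)%N => h2; clearbody Q S; nia.
Qed.

Lemma DN_le_cN r : (1 <= r)%N -> DN R nu r <= cN R nu r.
Proof.
move=> hr.
have hN0 : (0 < N%:R :> R) by rewrite ltr0n; case: N hN.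
have hbr : forall i : 'I_N, (nu r i)%:R + (N%:R)^-1 * \sum_(j < N | j != i) ((nu r j)%:R) ^+ 2 <= N%:R :> R.
  move=> i; have := key_nat r i hr.
  rewrite -(ler_nat R) natrD !natrM natr_sum.
  under eq_bigr => j _ do rewrite natrX.
  set s := \sum_(j < N | j != i) _ => h.
  rewrite -(ler_pM2l hN0) mulrDr mulrA mulfV ?gt_eqF // mul1r.
  by [].
rewrite /DN /cN invfM [_^-1 * _^-1]mulrC -mulrA ler_wpM2l ?invr_ge0 ?ler0n //.
rewrite ler_pdivrMl // mulr_sumr ler_sum // => i _.
by rewrite [X in _ <= X]mulrC ler_wpM2l ?ler0n.
Qed.

Lemma cN_le1 r : (1 <= r)%N -> cN R nu r <= 1.
Proof.
move=> hr.
have hN2 : (0 < N ^_ 2)%N by rewrite ffactnS ffactn1; case: N hN => // [[]].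
have h : (\sum_(i < N) (nu r i) ^_ 2 <= N ^_ 2)%N.
  rewrite ffactnS ffactn1.
  apply: (@leq_trans (\sum_(i < N) nu r i * N.-1)%N).
    apply: leq_sum => i _; rewrite ffactnS ffactn1 leq_mul2l; apply/orP; right.
    by rewrite -!subn1 leq_sub2r // nu_le.
  by rewrite -big_distrl /= hsum.
rewrite /cN -natr_sum.
rewrite ler_pdivrMl ?ltr0n // mulr1 ler_nat //.
Qed.

Lemma tau_bound (t : R) : 0 < t -> (forall u : R, 0 <= u -> exists s : nat, u <= csum R nu s) ->
  \sum_(i < tauN nu t) cN R nu i.+1 <= t + 1.
Proof.
move=> ht hfin.
have -> : \sum_(i < tauN nu t) cN R nu i.+1 = csum R nu (tauN nu t).
  by rewrite /csum big_add1 /= big_mkord.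
rewrite /tauN; case: pselect => [h|h]; last first.
  by exfalso; apply: h; apply: hfin; exact: ltW.
case: ex_minnP => T hT hmin.
case: T hT hmin => [|m] hT hmin.
  by rewrite /csum big_geq //; lra.
rewrite /csum big_nat_recr //=.
have hm : \sum_(1 <= r < m.+1) cN R nu r < t.
  rewrite ltNge; apply/negP => hc.
  by have := hmin m hc; rewrite ltnn.
have := cN_le1 (m.+1) isT; lra.
Qed.
End Spec.

Lemma geom (R : realType) (B : R) l : 0 <= B -> \sum_(k < l) B * (1 + B) ^+ k <= (1 + B) ^+ l.
Proof.
move=> hB.
suff -> : \sum_(k < l) B * (1 + B) ^+ k = (1 + B) ^+ l - 1 by lra.
elim: l => [|l IH]; first by rewrite big_ord0 expr0 subrr.
by rewrite big_ord_recr /= IH exprS; ring.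
Qed.

Definition ext (R : realType) l T (s : {ffun 'I_l -> 'I_T}) (f : nat -> R) (j : nat) : R :=
  oapp (fun o : 'I_l => f (s o).+1) 0 (insub j).
Arguments ext {R l T}.

Theorem lemma6 (R : realType) (N : nat) (nu : nat -> 'I_N -> nat)
  (hN : (2 <= N)%N)
  (hsum : forall r : nat, (1 <= r)%N -> (\sum_(i < N) nu r i)%N = N)
  (hfin : forall u : R, 0 <= u -> exists s : nat, u <= csum R nu s)
  (t : R) (ht : 0 < t) (l : nat) (B : R) (hB : 0 < B) :
  distinct_sum (tauN nu t) l (fun s => cN R nu s - B * DN R nu s) >=
  distinct_sum (tauN nu t) l (fun s => cN R nu s)
  - (\sum_(1 <= s < (tauN nu t).+1) DN R nu s) * (t + 1) ^+ (l.-1) * (1 + B) ^+ l.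
Proof.
have hA := tau_bound R N nu hN hsum t ht hfin.
move: hA.
rewrite big_add1 /= big_mkord.
set T := tauN nu t => hA.
set a := cN R nu. set d := DN R nu.
set x := fun s => a s - B * d s.
have hB' : 0 <= B by exact: ltW.
have hd : forall j, (1 <= j)%N -> 0 <= d j by move=> j _; exact: (DN_ge0 R N nu j).
have hda : forall j, (1 <= j)%N -> d j <= a j by move=> j hj; exact: (DN_le_cN R N nu hN hsum j hj).
have Hs : forall s : {ffun 'I_l -> 'I_T},
  \prod_(j < l) a (s j).+1 - \prod_(j < l) x (s j).+1 <=
  \sum_(k < l) B * (1 + B) ^+ k * \prod_(j < l) (if j == k then d (s j).+1 else a (s j).+1).
  move=> s.
  have := @tele R B (ext s x) (ext s a) (ext s d) hB' _ _ _ l.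
  have h1 : forall j, 0 <= ext s d j.
    by move=> j; rewrite /ext; case: insub => [o|] //=; exact: hd.
  have h2 : forall j, ext s d j <= ext s a j.
    by move=> j; rewrite /ext; case: insub => [o|] //=; exact: hda.
  have h3 : forall j, ext s x j = ext s a j - B * ext s d j.
    by move=> j; rewrite /ext; case: insub => [o|] //=; rewrite mulr0 subr0.
  move/(_ h1 h2 h3); rewrite !big_mkord => H.
  have E : forall f : nat -> R, \prod_(j < l) ext s f j = \prod_(j < l) f (s j).+1.
    by move=> f; apply: eq_bigr => j _; rewrite /ext valK.
  rewrite !E distrC in H.
  apply: le_trans (ler_norm _) (le_trans H _).
  apply: ler_sum => k _; rewrite le_eqVlt; apply/orP; left; apply/eqP.
  congr (_ * _); rewrite big_mkord; apply: eq_bigr => j _; rewrite /ext !valK //.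
have a0 : forall j, 0 <= a j by move=> j; exact: (cN_ge0 R N nu j).
have hB1 : forall k, 0 <= B * (1 + B) ^+ k.
  by move=> k; apply: mulr_ge0 => //; apply: exprn_ge0; lra.
have hSd : 0 <= \sum_(i < T) d i.+1 by apply: sumr_ge0 => i _; exact: hd.
set K := (\sum_(i < T) d i.+1) * (t + 1) ^+ l.-1.
rewrite /distinct_sum.
suff H : \sum_(s : {ffun 'I_l -> 'I_T} | injectiveb s) \prod_(j < l) a (s j).+1 -
   \sum_(s : {ffun 'I_l -> 'I_T} | injectiveb s) \prod_(j < l) x (s j).+1 <= K * (1 + B) ^+ l.
  by move: H; rewrite /K; lra.
rewrite -sumrB.
apply: le_trans (ler_sum _ (fun s _ => Hs s)) _.
rewrite [X in X <= _]big_mkcond /=.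
apply: (@le_trans _ _ (\sum_(s : {ffun 'I_l -> 'I_T}) \sum_(k < l) B * (1 + B) ^+ k *
   \prod_(j < l) (if j == k then d (s j).+1 else a (s j).+1))).
  apply: ler_sum => s _; case: ifP => _ //; apply: sumr_ge0 => k _; apply: mulr_ge0 => //.
  by apply: prodr_ge0 => j _; case: ifP => _; [exact: hd | exact: a0].
rewrite exchange_big /=.
apply: (@le_trans _ _ (\sum_(k < l) B * (1 + B) ^+ k * K)).
  apply: ler_sum => k _; rewrite -mulr_sumr; apply: ler_wpM2l => //.
  have E2 : \prod_(j < l) \sum_(i < T) (if j == k then d i.+1 else a i.+1) =
     \sum_(s : {ffun 'I_l -> 'I_T}) \prod_(j < l) (if j == k then d (s j).+1 else a (s j).+1).
    by rewrite bigA_distr_bigA.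
  rewrite -E2 (bigD1 k) //= eqxx /K; apply: ler_wpM2l => //.
  rewrite (eq_bigr (fun _ => \sum_(i < T) a i.+1)); last by move=> j /negbTE ->.
  apply: (@le_trans _ _ (\prod_(j < l | j != k) (t + 1))).
    by apply: ler_prod => j _; rewrite hA andbT; apply: sumr_ge0 => i _.
  by rewrite prodr_const cardC1 card_ord.
rewrite -mulr_suml mulrC; apply: ler_wpM2l.
  by rewrite /K mulr_ge0 // exprn_ge0 //; lra.
apply: geom; exact: hB'.
Qed.
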